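(* Let $H$ be the commutative Hopf algebra over $\mathbb{C}$ with linear basis the ladder trees $t_n$, $n\ge 0$ (where $t_0=1_H$ is the unit), with product $t_n\cdot t_m=\frac{(n+m)!}{n!\,m!}\,t_{n+m}$, coproduct $\Delta(t_n)=\sum_{j=0}^n t_j\otimes t_{n-j}$, counit $\bar e(t_n)=\delta_{n,0}$, and antipode $S$. Let $P=\mathrm{id}-E\circ\bar e$ be the projection onto the augmentation ideal (here $E:\mathbb{C}\to H$, $q\mapsto q1_H$). Fix $z\in\mathbb{C}$ and define linear maps $L,Li:H\to\mathbb{C}$ by $L(t_n)=\frac{\ln^n(z)}{n!}$ for $n\ge 0$ and $Li(t_n)=\mathrm{Li}_n(z)$ for $n\ge 1$ (the value $Li(t_0)$ is irrelevant below), where $\mathrm{Li}_n(z)=\sum_{k\ge1}z^k/k^n$ analytically continued. Let $L^{-1}=L\circ S$ and let $m$ denote multiplication in $\mathbb{C}$. For $p\ge 1$ set $$\widetilde a_p(z)=\sum_{j=0}^{p-1}(-1)^j\,\mathrm{Li}_{p-j}(z)\,\frac{\ln^j(z)}{j!}=\mathrm{Li}_p(z)-\mathrm{Li}_{p-1}(z)\ln(z)+\cdots+(-1)^{p-1}\mathrm{Li}_1(z)\frac{\ln^{p-1}(z)}{(p-1)!}.$$ Then for $z\in\mathbb{C}$ (with the same branches of $\ln$ and $\mathrm{Li}_n$ used on both sides), $$\widetilde a_p(z)=m\circ\big(L^{-1}\otimes Li\big)\circ(\mathrm{id}\otimes P)\circ\Delta(t_p).$$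
   Context: $L$ is multiplicative with respect to the product $t_n\cdot t_m=\frac{(n+m)!}{n!m!}t_{n+m}$, i.e. it is a character of $H$. $\mathrm{Li}_n$ denotes the polylogarithm, defined by $\sum_{k\ge1}z^k/k^n$ inside the unit disc and analytically continued with a branch cut along the real axis from $1$ to $+\infty$. *)

(* Defs.v *)
From HB Require Import structures.
From mathcomp Require Import all_boot all_order all_algebra.
From mathcomp Require Import reals complex.
Set Implicit Arguments. Unset Strict Implicit. Unset Printing Implicit Defensive.
Import Order.TTheory GRing.Theory Num.Theory.
Local Open Scope ring_scope.

Section LadderHopf.
Variable R : realType.
Local Notation C := R[i].

(* The Hopf algebra H of ladder trees: an element h = \sum_n c_n t_n is stored
   as the finitely supported coefficient sequence (c_n)_n, packaged as a
   {poly C} used ONLY as a container of coordinates (h`_n = coordinate on t_n);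
   the product of H is mulH below, NOT the polynomial product. *)
Definition H := {poly C}.

Definition t (n : nat) : H := 'X^n.

Definition mulH (a b : H) : H :=
  \sum_(i < size a) \sum_(j < size b)
     (a`_i * b`_j * ('C(i + j, i))%:R) *: t (i + j).

Definition counit (h : H) : C := h`_0.

Definition E (q : C) : H := q *: t 0.

Definition Paug (h : H) : H := h - E (counit h).

(* H (x) H : element \sum_(i,j) c_ij t_i (x) t_j stored as x : {poly {poly C}}
   with (x`_i)`_j = c_ij; the i-th coefficient x`_i : H is the right factor
   paired with t_i. *)
Definition HH := {poly {poly C}}.

Definition tt (i j : nat) : HH := (t j)%:P * 'X^i.

Definition Delta (h : H) : HH :=
  \sum_(n < size h) (h`_n)%:P%:P * \sum_(j < n.+1) tt j (n - j).

Definition id_tens_P (x : HH) : HH := \sum_(i < size x) (Paug x`_i)%:P * 'X^i.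

Definition mtens (f g : H -> C) (x : HH) : C :=
  \sum_(i < size x) \sum_(j < size x`_i) (x`_i)`_j * (f (t i) * g (t j)).

Definition linH (v : nat -> C) (h : H) : C := \sum_(n < size h) h`_n * v n.

(* H is connected graded, so the antipode is determined by
   m o (S (x) id) o Delta = E o ebar, i.e. S(t_0) = t_0 and, for n >= 1,
   S(t_n) = - \sum_(j<n) S(t_j) . t_(n-j). *)
Fixpoint Santi_list (n : nat) : seq H :=
  match n with
  | 0 => [:: t 0]
  | n'.+1 =>
      let s := Santi_list n' in
      rcons s (- \sum_(j < n'.+1) mulH (nth 0 s j) (t (n'.+1 - j)))
  end.

Definition Santi_t (n : nat) : H := nth 0 (Santi_list n) n.

Definition Santi (h : H) : H := \sum_(n < size h) h`_n *: Santi_t n.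

Definition Lchar (lnz : C) : H -> C := linH (fun n => lnz ^+ n / (n`!)%:R).

Definition Linv (lnz : C) : H -> C := fun h => Lchar lnz (Santi h).

Definition Lichar (Li : nat -> C -> C) (z : C) : H -> C := linH (fun n => Li n z).

Definition atilde (ln : C -> C) (Li : nat -> C -> C) (p : nat) (z : C) : C :=
  \sum_(j < p) (-1) ^+ j * Li (p - j)%N z * ((ln z) ^+ j / (j`!)%:R).

End LadderHopf.

(* Main.v *)
Require Import Defs.
From HB Require Import structures.
From mathcomp Require Import all_boot all_order all_algebra.
From mathcomp Require Import reals complex.
From mathcomp Require Import ring.
Import Order.TTheory GRing.Theory Num.Theory.
Local Open Scope ring_scope.

Lemma sum_widen (V : nmodType) n N (G : nat -> V) : (n <= N)%N ->
  (forall i, (n <= i)%N -> G i = 0) -> \sum_(i < n) G i = \sum_(i < N) G i.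
Proof.
move=> HN HG; rewrite (big_ord_widen N G HN) big_mkcond /=.
apply: eq_bigr => i _; case: ifP => // /negbT; rewrite -leqNgt => /HG -> //.
Qed.

Lemma sum_one (V : nmodType) n a (Ha : (a < n)%N) (F : 'I_n -> V) :
  (forall i : 'I_n, val i != a -> F i = 0) -> \sum_(i < n) F i = F (Ordinal Ha).
Proof.
move=> HG; rewrite (bigD1 (Ordinal Ha)) //= big1 ?addr0 // => i Hi; apply: HG.
Qed.

Arguments sum_one {V n a} Ha {F}.
Section S.
Variable R : realType.
Local Notation C := R[i].

Lemma size_t n : size (t R n) = n.+1. Proof. by rewrite /t size_polyXn. Qed.
Lemma coef_t n i : (t R n)`_i = (i == n)%:R. Proof. by rewrite /t coefXn. Qed.

Lemma mulH_t (c : C) a b : c != 0 ->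
  mulH (c *: t R a) (t R b) = (c * 'C(a+b,a)%:R) *: t R (a+b).
Proof.
move=> c0; rewrite /mulH size_scale // !size_t.
rewrite (sum_one (ltnSn a)); last first.
  move=> i Hi; apply: big1 => j _; rewrite coefZ coef_t (negbTE Hi) mulr0 !mul0r scale0r //.
rewrite (sum_one (ltnSn b)); last first.
  move=> j Hj; rewrite /= coef_t (negbTE Hj) mulr0 mul0r scale0r //.
by rewrite /= coefZ !coef_t !eqxx mulr1 mulr1.
Qed.

Lemma Santi_list_size n : size (Santi_list R n) = n.+1.
Proof. by elim: n => //= n IH; rewrite size_rcons IH. Qed.

Lemma alt_binom n : - \sum_(i < n.+1) ((-1) ^+ i * ('C(n.+1, i))%:R : C) = (-1) ^+ n.+1.
Proof.
have := exprD1n (-1 : C) n.+1.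
rewrite addNr expr0n /= big_ord_recr /= binn mulr1n.
move/eqP; rewrite eq_sym addr_eq0 => /eqP HH.
rewrite -[RHS]opprK -HH; congr (- _); apply: eq_bigr => i _; by rewrite mulr_natr.
Qed.

Lemma Santi_list_nth n j : (j <= n)%N -> nth 0 (Santi_list R n) j = (-1)^+j *: t R j.
Proof.
elim: n j => [|n IH] j.
  by rewrite leqn0 => /eqP -> /=; rewrite expr0 scale1r.
move=> Hj /=; rewrite nth_rcons Santi_list_size; case: ltnP => Hjn.
  by apply: IH; rewrite -ltnS.
have -> : j = n.+1 by apply/eqP; rewrite eqn_leq Hj Hjn.
rewrite eqxx.
rewrite (eq_bigr (fun i : 'I_n.+1 => ((-1)^+i * ('C(n.+1, i))%:R) *: t R n.+1)); last first.
  move=> i _; rewrite IH; last by rewrite -ltnS.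
  by rewrite mulH_t ?signr_eq0 // subnKC // ltnW.
by rewrite -scaler_suml -scaleNr alt_binom.
Qed.

Lemma Santi_tE n : Santi (t R n) = (-1)^+n *: t R n.
Proof.
rewrite /Santi size_t (sum_one (ltnSn n)); last first.
  by move=> i Hi; rewrite coef_t (negbTE Hi) scale0r.
by rewrite /= coef_t eqxx scale1r /Santi_t Santi_list_nth.
Qed.

Lemma linH_t v (c : C) n : c != 0 -> linH v (c *: t R n) = c * v n.
Proof.
move=> c0; rewrite /linH size_scale // size_t (sum_one (ltnSn n)); last first.
  by move=> i Hi; rewrite coefZ coef_t (negbTE Hi) mulr0 mul0r.
by rewrite /= coefZ coef_t eqxx mulr1.
Qed.

Lemma Delta_t p : Delta (t R p) = \poly_(i < p.+1) t R (p - i).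
Proof.
rewrite /Delta size_t (sum_one (ltnSn p)); last first.
  by move=> i Hi; rewrite coef_t (negbTE Hi) mul0r.
rewrite /= coef_t eqxx mul1r.
apply/polyP => k; rewrite coef_poly coef_sum.
case: ltnP => Hk.
  rewrite (sum_one Hk) /=; first by rewrite /tt coefCM coefXn eqxx mulr1.
  by move=> i Hi; rewrite /tt coefCM coefXn eq_sym (negbTE Hi) mulr0.
apply: big1 => i _; rewrite /tt coefCM coefXn.
have : k != i by rewrite neq_ltn (leq_trans (ltn_ord i) Hk) orbT.
by move/negbTE ->; rewrite mulr0.
Qed.

Lemma idP_Delta p : id_tens_P (Delta (t R p)) = \poly_(i < p.+1) Paug (t R (p - i)).
Proof.
rewrite Delta_t /id_tens_P.
rewrite (@sum_widen _ _ p.+1 (fun i => (Paug (\poly_(i0 < p.+1) t R (p - i0))`_i)%:P * 'X^i)) ?size_poly //; last first.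
  move=> i Hi; rewrite nth_default //.
  by rewrite /Paug /E /counit coef0 scale0r subr0 mul0r.
rewrite [RHS]poly_def; apply: eq_bigr => i _.
by rewrite coef_poly ltn_ord mul_polyC.
Qed.

End S.

Theorem mainTheorem1 (R : realType) (ln : R[i] -> R[i]) (Li : nat -> R[i] -> R[i])
    (p : nat) (z : R[i]) :
  (0 < p)%N ->
  atilde ln Li p z =
  mtens (Linv (ln z)) (Lichar Li z) (id_tens_P (Delta (t R p))).
Proof.
move=> p0; rewrite idP_Delta /mtens.
set y := \poly_(i < p.+1) _.
rewrite (@sum_widen _ _ p.+1 (fun i => \sum_(j < size y`_i) y`_i`_j * (Linv (ln z) (t R i) * Lichar Li z (t R j)))) ?size_poly //; last first.
  by move=> i Hi; rewrite nth_default // size_poly0 big_ord0.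
rewrite big_ord_recr /= {2}/y coef_poly ltnSn subnn.
have -> : Paug (t R 0) = 0.
  by rewrite /Paug /E /counit coef_t eqxx scale1r subrr.
rewrite polyseq0 big_ord0 addr0 /atilde.
apply: eq_bigr => i _.
have Hi : (i < p)%N := ltn_ord i.
rewrite /y coef_poly ltnW // .
have -> : Paug (t R (p - i)) = t R (p - i).
  by rewrite /Paug /E /counit coef_t eq_sym subn_eq0 leqNgt Hi scale0r subr0.
rewrite (_ : size (t R (p - i)) = (p-i).+1); last by apply: size_t. rewrite (sum_one (ltnSn (p - i))); last first.
  by move=> j Hj; rewrite coef_t (negbTE Hj) mul0r.
rewrite /= coef_t eqxx mul1r /Linv Santi_tE /Lchar linH_t ?signr_eq0 //.
rewrite /Lichar -[t R (p - i)]scale1r linH_t ?oner_eq0 //.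
ring.
Qed.
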